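(* Let $X$ be a real Banach space. The following statements are equivalent. (1) $X$ is rotund. (2) $S_X$ is uniquely remotal on $X\setminus\{0\}$. (3) $S_X$ is uniquely remotal on $X\setminus B_X$. (4) $S_X$ is uniquely remotal on $B_X\setminus\{0\}$. (5) $S_X$ is uniquely remotal on $B_X\setminus kB_X$ for any (equivalently, for some) $0<k<1$. (6) $S_X$ is uniquely remotal on $S_X$.
   Context: $B_X$ and $S_X$ denote the closed unit ball and unit sphere of $X$. For a non-empty bounded $F\subseteq X$ and $x\in X$, $r(F,x)=\sup\{\|x-y\|:y\in F\}$ and $Q_F(x)=\{y\in F:\|x-y\|= r(F,x)\}$ (the set of farthest points). $F$ is uniquely remotal on a set $A$ if $Q_F(x)$ is a singleton for every $x\in A$. $X$ is rotund if $\|\frac{x_1+x_2}{2}\|<1$ whenever $x_1,x_2\in S_X$, $x_1\neq x_2$. *)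

(* Defs.v *)
From HB Require Import structures.
From mathcomp Require Import all_boot all_order all_algebra.
From mathcomp Require Import all_classical all_reals all_analysis.
Unset Implicit Arguments. Unset Printing Implicit Defensive.
Import Order.TTheory GRing.Theory Num.Theory.
Import numFieldNormedType.Exports.
Local Open Scope classical_set_scope.
Local Open Scope ring_scope.

Section Remotal.
Variables (R : realType) (X : normedModType R).

Definition unit_ball : set X := [set x | `|x| <= 1].
Definition unit_sphere : set X := [set x | `|x| = 1].

Definition rad (F : set X) (x : X) : R := sup [set `|x - y| | y in F].

Definition farthest (F : set X) (x : X) : set X :=
  [set y | F y /\ `|x - y| = rad F x].

Definition uniquely_remotal (F A : set X) : Prop :=
  forall x, A x -> exists y, farthest F x = [set y].

Definition rotund : Prop :=
  forall x1 x2 : X, unit_sphere x1 -> unit_sphere x2 -> x1 != x2 ->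
    `|(2 ^-1 : R) *: (x1 + x2)| < 1.

End Remotal.

Arguments rad {R X} F x.
Arguments farthest {R X} F x.
Arguments uniquely_remotal {R X} F A.

(* Main.v *)
Require Import Defs.
From HB Require Import structures.
From mathcomp Require Import all_boot all_order all_algebra.
From mathcomp Require Import all_classical all_reals all_analysis.
From mathcomp Require Import lra.
Import Order.TTheory GRing.Theory Num.Theory.
Import numFieldNormedType.Exports.
Local Open Scope classical_set_scope.
Local Open Scope ring_scope.

Section S.
Variables (R : realType) (X : normedModType R).

Lemma rad_eq (x : X) : x != 0 -> Defs.rad (unit_sphere R X) x = `|x| + 1.
Proof.
move=> x0; have xp : 0 < `|x| by rewrite normr_gt0.
apply/eqP; rewrite eq_le; apply/andP; split.
  apply: ge_sup.
    exists `|x - - (`|x|^-1 *: x)|; exists (- (`|x|^-1 *: x)) => //.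
    by rewrite /unit_sphere /= normrN normrZ ger0_norm ?invr_ge0 ?ltW // mulVf // gt_eqF.
  move=> r [y Sy <-]; apply: le_trans (ler_normB _ _) _.
  by rewrite Sy.
apply: ub_le_sup.
  exists (`|x| + 1) => r [y Sy <-]; apply: le_trans (ler_normB _ _) _.
  by rewrite Sy.
exists (- (`|x|^-1 *: x)).
  by rewrite /unit_sphere /= normrN normrZ ger0_norm ?invr_ge0 ?ltW // mulVf // gt_eqF.
rewrite opprK -{1}(scale1r x) -scalerDl normrZ ger0_norm; last first.
  by rewrite addr_ge0 // invr_ge0 ltW.
rewrite mulrDl mulVf ?gt_eqF // mul1r addrC.
done.
Qed.

Lemma unitS (x : X) : x != 0 -> `| (`|x|^-1) *: x | = 1.
Proof.
move=> x0; have xp : 0 < `|x| by rewrite normr_gt0.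
by rewrite normrZ ger0_norm ?invr_ge0 ?ltW // mulVf // gt_eqF.
Qed.

Lemma L1 (x : X) : rotund R X -> x != 0 ->
  farthest (unit_sphere R X) x = [set - (`|x|^-1 *: x)].
Proof.
move=> rot x0; have xp : 0 < `|x| by rewrite normr_gt0.
set u := `|x|^-1 *: x.
have uS : `|u| = 1 by exact: unitS.
have xu : x = `|x| *: u by rewrite /u scalerA mulfV ?gt_eqF // scale1r.
rewrite /farthest rad_eq //.
apply/seteqP; split => y /=.
  move=> [yS hy].
  have h2 : 2 <= `|u - y|.
    have [a1|a1] := leP 1 `|x|.
      have : `|x - y| <= (`|x| - 1) + `|u - y|.
        have -> : x - y = (`|x| - 1) *: u + (u - y).
          by rewrite scalerBl scale1r -xu addrA subrK.
        apply: le_trans (ler_normD _ _) _.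
        by rewrite normrZ uS mulr1 ger0_norm // subr_ge0.
      rewrite hy; lra.
    have : `|x - y| <= `|x| * `|u - y| + (1 - `|x|).
      have -> : x - y = `|x| *: (u - y) - (1 - `|x|) *: y.
        by rewrite scalerBr -xu scalerBl scale1r opprB addrA subrK.
      apply: le_trans (ler_normB _ _) _.
      by rewrite !normrZ yS mulr1 ger0_norm // ger0_norm // subr_ge0 ltW.
    rewrite hy => h.
    have : `|x| * 2 <= `|x| * `|u - y| by lra.
    by rewrite ler_pM2l.
  suff -> : u = - y by rewrite opprK.
  apply/eqP.
  apply/negPn/negP => neq.
  have := rot u (- y); rewrite /unit_sphere /= normrN => /(_ uS yS neq).
  rewrite normrZ ger0_norm ?invr_ge0 // => h.
  have : 2^-1 * 2 <= 2^-1 * `|u - y| by rewrite ler_pM2l ?invr_gt0.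
  rewrite mulVf //; lra.
move=> ->; split; first by rewrite /unit_sphere /= normrN.
by rewrite opprK {1}xu -{2}(scale1r u) -scalerDl normrZ uS mulr1 ger0_norm // addr_ge0 // ltW.
Qed.

Lemma L2 : ~ rotund R X -> forall a : R, 0 < a ->
  exists x : X, `|x| = a /\ ~ exists y, farthest (unit_sphere R X) x = [set y].
Proof.
move=> nrot a a0.
have [x1 [x2 [S1 [S2 [neq h]]]]] : exists x1 x2 : X, unit_sphere R X x1 /\
  unit_sphere R X x2 /\ x1 != x2 /\ ~ (`|(2 ^-1 : R) *: (x1 + x2)| < 1).
  apply: contrapT => H; apply: nrot => x1 x2 h1 h2 n.
  apply: contrapT => hh; apply: H; by exists x1, x2.
rewrite /unit_sphere /= in S1 S2.
set v := (2 ^-1 : R) *: (x1 + x2).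
have vn : `|v| = 1.
  apply/eqP; rewrite eq_le; apply/andP; split; last by rewrite leNgt; apply/negP.
  rewrite normrZ ger0_norm ?invr_ge0 //.
  have := ler_normD x1 x2; rewrite S1 S2 => hh.
  have : 2^-1 * `|x1 + x2| <= 2^-1 * 2 by rewrite ler_pM2l ?invr_gt0.
  by rewrite mulVf.
have v2 : x1 + x2 = 2 *: v by rewrite /v scalerA mulfV // scale1r.
have v0 : v != 0 by rewrite -normr_gt0 vn.
exists (- (a *: v)); split.
  by rewrite normrN normrZ vn mulr1 gtr0_norm.
have x0 : - (a *: v) != 0.
  by rewrite oppr_eq0 scaler_eq0 negb_or v0 gt_eqF.
have far : forall z w, `|z| = 1 -> `|w| = 1 -> z + w = 2 *: v ->
    farthest (unit_sphere R X) (- (a *: v)) z.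
  move=> z w zS wS zw; split => //.
  rewrite rad_eq // normrN normrZ vn mulr1 gtr0_norm //.
  apply/eqP; rewrite eq_le; apply/andP; split.
    by apply: le_trans (ler_normB _ _) _; rewrite normrN normrZ vn mulr1 gtr0_norm // zS.
  have : `|(a + 2) *: v| <= `|- (a *: v) - z| + `|w|.
    have -> : (a + 2) *: v = - (- (a *: v) - z) + w.
      rewrite opprB opprK scalerDl -zw.
      by rewrite addrA [a *: v + z]addrC.
    by apply: le_trans (ler_normD _ _) _; rewrite normrN.
  rewrite normrZ vn mulr1 wS gtr0_norm ?addr_gt0 //; lra.
move=> [y hy].
have f1 := far x1 x2 S1 S2 v2.
have f2 : farthest (unit_sphere R X) (- (a *: v)) x2 by apply: (far x2 x1) => //; rewrite addrC.
rewrite hy /= in f1 f2.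
by move: neq; rewrite f1 f2 eqxx.
Qed.

End S.

Theorem theorem3p1 (R : realType) (X : completeNormedModType R) :
  [<-> rotund R X;
       uniquely_remotal (unit_sphere R X) (setT `\ (0 : X));
       uniquely_remotal (unit_sphere R X) (setT `\` unit_ball R X);
       uniquely_remotal (unit_sphere R X) (unit_ball R X `\ (0 : X));
       (forall k : R, 0 < k < 1 ->
          uniquely_remotal (unit_sphere R X)
            (unit_ball R X `\` [set x | `|x| <= k]));
       (exists2 k : R, 0 < k < 1 &
          uniquely_remotal (unit_sphere R X)
            (unit_ball R X `\` [set x | `|x| <= k]));
       uniquely_remotal (unit_sphere R X) (unit_sphere R X)].
Proof.
have H1 : rotund R X -> forall x : X, x != 0 ->
    exists y, farthest (unit_sphere R X) x = [set y].
  by move=> rot x x0; eexists; apply: L1.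
have H2 : forall a : R, 0 < a -> (forall x : X, `|x| = a ->
    exists y, farthest (unit_sphere R X) x = [set y]) -> rotund R X.
  move=> a a0 H; apply: contrapT => nrot.
  by have [x [xa []]] := @L2 R X nrot a a0; apply: H.
have n0 : forall x : X, `|x| = 1 -> x != 0.
  by move=> x h; rewrite -normr_gt0 h.
tfae.
- move=> rot x [_ x0]; apply: H1 => //; exact/eqP.
- move=> H x [_ nb]; apply: H; split => // /= x0; apply: nb.
  by rewrite x0 /unit_ball /= normr0 ler01.
- move=> H; have rot : rotund R X.
    by apply: (H2 2) => // x xa; apply: H; split => //; rewrite /unit_ball /= xa; lra.
  move=> x [_ x0]; apply: H1 => //; exact/eqP.
- move=> H; have rot : rotund R X.
    apply: (H2 1) => // x xa; apply: H; split; first by rewrite /unit_ball /= xa.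
    by move=> /= x0; move: xa; rewrite x0 normr0 => /eqP; rewrite eq_sym oner_eq0.
  move=> k /andP[k0 k1] x [_ /= xk]; apply: H1 => //.
  by apply/eqP => x0; apply: xk; rewrite x0 normr0 ltW.
- move=> H; exists 2^-1; first by apply/andP; split; lra.
  by apply: H; apply/andP; split; lra.
- move=> [k /andP[k0 k1] H]; have rot : rotund R X.
    apply: (H2 1) => // x xa; apply: H; split; first by rewrite /unit_ball /= xa.
    by rewrite /= xa; lra.
  by move=> x /= xa; apply: H1 => //; apply: n0.
- move=> H; apply: (H2 1) => // x xa; exact: H.
Qed.
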